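(* Let $\beta\in B$ be an inversion point whose left and right vectors are both equal to $(0,0,-1)\in S^2$. For $p=(a,b,c)\in\mathbb{R}^3$ put $q=a+ib\in\mathbb{C}$, and for $P=(A,B,C)$ put $Q=A+iB$; these are the orthogonal projections to the $xy$-plane, identified with $\mathbb{C}$. There is a bijection $\beta\mapsto\kappa_\beta$ from the set of such inversion points onto the set of inversions of $\mathbb{C}$, i.e. maps $z\mapsto \frac{\alpha}{z-z_0}+w_0$ with $\alpha\in\mathbb{C}^*$ and $z_0,w_0\in\mathbb{C}$. It has the following property: for all $p,P\in\mathbb{R}^3$, the pseudo spherical condition for $(p,P)$ at $\beta$ holds if and only if $q$ lies in the domain of $\kappa_\beta$ and $\kappa_\beta(q)=Q$. Likewise, consider similarity points $\beta$ whose left and right vectors both equal $(0,0,-1)$. There is a bijection $\beta\mapsto\kappa_\beta$ from the set of such points onto the set of similarities of $\mathbb{C}$, i.e. maps $z\mapsto\alpha z+\gamma$ with $\alpha\in\mathbb{C}^*$ and $\gamma\in\mathbb{C}$. It has the property that, for all $p,P\in\mathbb{R}^3$, the pseudo spherical condition for $(p,P)$ at $\beta$ holds if and only if $\kappa_\beta(q)=Q$.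
   Context: Write a direct isometry of $\mathbb{R}^3$ as $v\mapsto Mv+y$ with $M\in SO(3)$, $y\in\mathbb{R}^3$, and put $x=-M^ty$, $r=\langle y,y\rangle$. It corresponds to the point $(h:M:x:y:r)=(1:m_{11}:\dots:m_{33}:x_1:x_2:x_3:y_1:y_2:y_3:r)\in\mathbb{P}^{16}_{\mathbb{C}}$. $X$ is the complex Zariski closure of the set of all such points. Throughout, $\langle u,u'\rangle=u^tu'$ is the complex bilinear form on $\mathbb{C}^3$. The boundary is $B=X\cap\{h=0\}$. For $\beta=(0:M:x:y:r)\in B$, the matrix $M$ has rank at most $1$; put $N=rM+2yx^t$. The point $\beta$ is: - an inversion point if $M\neq0$ and $N\neq0$; - a butterfly point if $M\neq 0$ and $N=0$; - a similarity point if $M=0$, $x\neq0$ and $y\neq 0$. Left and right vectors. For a nonzero $u=(\alpha,\beta',\gamma)\in\mathbb{C}^3$ with $\langle u,u\rangle=0$, define $S(u)\in S^2$ in two steps. - First map $u$ to $\mathbb{P}^1_{\mathbb{C}}$: send it to $(\alpha-i\beta':\gamma)$ if $(i\alpha+\beta',\gamma)\neq(0,0)$, and to $(\gamma:-\alpha-i\beta')$ otherwise. - Then apply the inverse stereographic projection: $(0:1)\mapsto(0,0,1)$ and $(1:a+ib)\mapsto\frac{1}{a^2+b^2+1}(2a,2b,a^2+b^2-1)$ for $a,b\in\mathbb{R}$. For an inversion or butterfly point, write $M=vw^t$ with $v,w\in\mathbb{C}^3$ nonzero and isotropic. The left vector is $L=S(w)$ and the right vector is $R=S(v)$. For a similarity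 point, $x$ and $y$ are nonzero isotropic vectors, and $L=S(x)$, $R=S(y)$. For example, $S((1,i,0))=(0,0,-1)$. The pseudo spherical condition for $(p,P)\in\mathbb{R}^3\times\mathbb{R}^3$ at $\beta=(0:M:x:y:r)\in B$ is the (complex) equation $$r-2\langle p,x\rangle-2\langle y,P\rangle-2\langle Mp,P\rangle=0.$$ *)

(* Defs.v *)
From HB Require Import structures.
From mathcomp Require Import all_boot all_order all_algebra.
From mathcomp Require Import complex.
From mathcomp Require Import reals.
From mathcomp Require Import mpoly.

Set Implicit Arguments.
Unset Strict Implicit.
Unset Printing Implicit Defensive.

Import Order.TTheory GRing.Theory Num.Theory.
Local Open Scope ring_scope.
Local Open Scope complex_scope.

Section Defs.
Variable R : realType.
Local Notation C := R[i].

Definition cdot (u v : 'cV[C]_3) : C := \sum_(k < 3) u k 0 * v k 0.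

Definition isotropic (u : 'cV[C]_3) : Prop := cdot u u = 0.

Definition cvec (p : 'cV[R]_3) : 'cV[C]_3 := map_mx (fun a => a%:C) p.
Definition cmat (M : 'M[R]_3) : 'M[C]_3 := map_mx (fun a => a%:C) M.

(* a point (h : M : x : y : r) of P^16, given by homogeneous coordinates *)
Record pt := Pt { ph : C; pM : 'M[C]_3; px : 'cV[C]_3; py : 'cV[C]_3; pr : C }.

(* coordinates in the order (h, m11, m12, ..., m33, x1, x2, x3, y1, y2, y3, r) *)
Definition coords (b : pt) (k : 'I_17) : C :=
  let n := val k in
  if n == 0%N then ph b
  else if (n < 10)%N then pM b (inord ((n - 1) %/ 3)) (inord ((n - 1) %% 3))
  else if (n < 13)%N then px b (inord (n - 10)) 0
  else if (n < 16)%N then py b (inord (n - 13)) 0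
  else pr b.

Definition pt_scale (l : C) (b : pt) : pt :=
  Pt (l * ph b) (l *: pM b) (l *: px b) (l *: py b) (l * pr b).

Definition same_proj_point (b b' : pt) : Prop :=
  exists l : C, l != 0 /\ b' = pt_scale l b.

(* the point of P^16 attached to the direct isometry v |-> M v + y *)
Definition isom_pt (M : 'M[R]_3) (y : 'cV[R]_3) : pt :=
  let y' := cvec y in
  Pt 1 (cmat M) (- ((cmat M)^T *m y')) y' (cdot y' y').

Definition is_rotation (M : 'M[R]_3) : Prop := M^T *m M = 1%:M /\ \det M = 1.

(* X = complex Zariski closure in P^16 of the set of all isom_pt M y:
   a (nonzero) coordinate vector lies in X iff every homogeneous polynomial
   vanishing on all the points isom_pt M y vanishes at it. *)
Definition inX (b : pt) : Prop :=
  (exists k, coords b k != 0) /\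
  forall (d : nat) (f : {mpoly C[17]}), f \is d.-homog ->
    (forall (M : 'M[R]_3) (y : 'cV[R]_3), is_rotation M -> f.@[coords (isom_pt M y)] = 0) ->
    f.@[coords b] = 0.

Definition inB (b : pt) : Prop := inX b /\ ph b = 0.

Definition Nmat (b : pt) : 'M[C]_3 := pr b *: pM b + 2%:R *: (py b *m (px b)^T).

Definition inversion_point (b : pt) : Prop := inB b /\ pM b != 0 /\ Nmat b != 0.
Definition butterfly_point (b : pt) : Prop := inB b /\ pM b != 0 /\ Nmat b = 0.
Definition similarity_point (b : pt) : Prop :=
  inB b /\ pM b = 0 /\ px b != 0 /\ py b != 0.

(* inverse stereographic projection P^1_C -> S^2, (s : t) |-> ... *)
Definition inv_stereo (s t : C) : R * R * R :=
  if s == 0 then (0, 0, 1)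
  else let z := t / s in
       let a := complex.Re z in let b := complex.Im z in
       let n := a ^+ 2 + b ^+ 2 in
       ((2 * a) / (n + 1), (2 * b) / (n + 1), (n - 1) / (n + 1)).

Definition Smap (u : 'cV[C]_3) : R * R * R :=
  let al := u 0 0 in let be := u 1 0 in let ga := u 2%:R 0 in
  if ('i * al + be != 0) || (ga != 0) then inv_stereo (al - 'i * be) ga
  else inv_stereo ga (- al - 'i * be).

Definition left_right_ib (b : pt) (L Rv : R * R * R) : Prop :=
  exists v w : 'cV[C]_3, v != 0 /\ w != 0 /\ isotropic v /\ isotropic w /\
    pM b = v *m w^T /\ Smap w = L /\ Smap v = Rv.

Definition left_right_sim (b : pt) (L Rv : R * R * R) : Prop :=
  Smap (px b) = L /\ Smap (py b) = Rv.

Definition south : R * R * R := (0, 0, -1).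

Definition pseudo_spherical (b : pt) (p P : 'cV[R]_3) : Prop :=
  pr b - 2%:R * cdot (cvec p) (px b) - 2%:R * cdot (py b) (cvec P)
       - 2%:R * cdot (pM b *m cvec p) (cvec P) = 0.

Definition proj_xy (p : 'cV[R]_3) : C := p 0 0 +i* p 1 0.

Definition inversion_map (al z0 w0 : C) : C -> option C :=
  fun z => if z == z0 then None else Some (al / (z - z0) + w0).

Definition is_inversion (f : C -> option C) : Prop :=
  exists al z0 w0 : C, al != 0 /\ f = inversion_map al z0 w0.

Definition is_similarity (f : C -> C) : Prop :=
  exists al ga : C, al != 0 /\ f = (fun z => al * z + ga).

End Defs.

(* Main.v *)
Require Import Defs.
From HB Require Import structures.
From mathcomp Require Import all_boot all_order all_algebra.
From mathcomp Require Import complex.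
From mathcomp Require Import reals.
From mathcomp Require Import mpoly.
From mathcomp Require Import ring lra.
Set Implicit Arguments.
Unset Strict Implicit.
Unset Printing Implicit Defensive.
Import Order.TTheory GRing.Theory Num.Theory.
Local Open Scope complex_scope.
Local Open Scope ring_scope.

Definition o0 : 'I_3 := @Ordinal 3 0 isT.
Definition o1 : 'I_3 := @Ordinal 3 1 isT.
Definition o2 : 'I_3 := @Ordinal 3 2 isT.

Definition col3 (K : Type) (a b c : K) : 'cV[K]_3 :=
  \col_(r < 3) match val r with 0 => a | 1 => b | _ => c end.
Definition mx3 (K : Type) (a b c d e f g h i : K) : 'M[K]_3 :=
  \matrix_(r < 3, s < 3) match val r, val s with
   | 0, 0 => a | 0, 1 => b | 0, _ => c
   | 1, 0 => d | 1, 1 => e | 1, _ => f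
   | _, 0 => g | _, 1 => h | _, _ => i end.

Lemma ord3P (i : 'I_3) : i = o0 \/ i = o1 \/ i = o2.
Proof.
case: i => [[|[|[|n]]] Hn].
- by left; apply/val_inj.
- by right; left; apply/val_inj.
- by right; right; apply/val_inj.
- by [].
Qed.

Lemma col3P (K : Type) (u : 'cV[K]_3) : u = col3 (u o0 0) (u o1 0) (u o2 0).
Proof.
apply/matrixP => i j; rewrite !mxE (ord1 j).
by case: (ord3P i) => [->|[->|->]].
Qed.

Lemma mx3P (K : Type) (A : 'M[K]_3) :
  A = mx3 (A o0 o0) (A o0 o1) (A o0 o2) (A o1 o0) (A o1 o1) (A o1 o2)
          (A o2 o0) (A o2 o1) (A o2 o2).
Proof.
apply/matrixP => i j; rewrite !mxE.
by case: (ord3P i) => [->|[->|->]]; case: (ord3P j) => [->|[->|->]].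
Qed.

Lemma col3E0 (K : Type) a b c (j : 'I_1) : @col3 K a b c o0 j = a. Proof. by rewrite mxE. Qed.
Lemma col3E1 (K : Type) a b c (j : 'I_1) : @col3 K a b c o1 j = b. Proof. by rewrite mxE. Qed.
Lemma col3E2 (K : Type) a b c (j : 'I_1) : @col3 K a b c o2 j = c. Proof. by rewrite mxE. Qed.

Section MX3.
Variable K : comNzRingType.

Lemma big3 (F : 'I_3 -> K) : \sum_(k < 3) F k = F o0 + F o1 + F o2.
Proof.
rewrite !big_ord_recl big_ord0 addr0 addrA.
by congr (F _ + F _ + F _); apply/val_inj.
Qed.

Lemma mul_mx3 (a b c d e f g h i a' b' c' d' e' f' g' h' i' : K) :
  mx3 a b c d e f g h i *m mx3 a' b' c' d' e' f' g' h' i' =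
  mx3 (a * a' + b * d' + c * g') (a * b' + b * e' + c * h') (a * c' + b * f' + c * i')
      (d * a' + e * d' + f * g') (d * b' + e * e' + f * h') (d * c' + e * f' + f * i')
      (g * a' + h * d' + i * g') (g * b' + h * e' + i * h') (g * c' + h * f' + i * i').
Proof.
apply/matrixP => r s; rewrite !mxE big3 !mxE.
by case: (ord3P r) => [->|[->|->]]; case: (ord3P s) => [->|[->|->]].
Qed.

Lemma mul_mx3c (a b c d e f g h i x y z : K) :
  mx3 a b c d e f g h i *m col3 x y z =
  col3 (a * x + b * y + c * z) (d * x + e * y + f * z) (g * x + h * y + i * z).
Proof.
apply/matrixP => r s; rewrite !mxE big3 !mxE.
by case: (ord3P r) => [->|[->|->]].
Qed.

Lemma tr_mx3 (a b c d e f g h i : K) :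
  (mx3 a b c d e f g h i)^T = mx3 a d g b e h c f i.
Proof.
apply/matrixP => r s; rewrite !mxE.
by case: (ord3P r) => [->|[->|->]]; case: (ord3P s) => [->|[->|->]].
Qed.

Lemma scale_mx3 (l a b c d e f g h i : K) :
  l *: mx3 a b c d e f g h i = mx3 (l * a) (l * b) (l * c) (l * d) (l * e) (l * f) (l * g) (l * h) (l * i).
Proof.
apply/matrixP => r s; rewrite !mxE.
by case: (ord3P r) => [->|[->|->]]; case: (ord3P s) => [->|[->|->]].
Qed.

Lemma scale_col3 (l a b c : K) : l *: col3 a b c = col3 (l * a) (l * b) (l * c).
Proof. apply/matrixP => r s; rewrite !mxE. by case: (ord3P r) => [->|[->|->]]. Qed.

Lemma add_col3 (a b c a' b' c' : K) : col3 a b c + col3 a' b' c' = col3 (a+a') (b+b') (c+c').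
Proof. apply/matrixP => r s; rewrite !mxE. by case: (ord3P r) => [->|[->|->]]. Qed.

Lemma opp_col3 (a b c : K) : - col3 a b c = col3 (-a) (-b) (-c).
Proof. apply/matrixP => r s; rewrite !mxE. by case: (ord3P r) => [->|[->|->]]. Qed.

Lemma add_mx3 (a b c d e f g h i a' b' c' d' e' f' g' h' i' : K) :
  mx3 a b c d e f g h i + mx3 a' b' c' d' e' f' g' h' i' =
  mx3 (a+a') (b+b') (c+c') (d+d') (e+e') (f+f') (g+g') (h+h') (i+i').
Proof.
apply/matrixP => r s; rewrite !mxE.
by case: (ord3P r) => [->|[->|->]]; case: (ord3P s) => [->|[->|->]].
Qed.

Lemma mx3_1 : (1%:M : 'M[K]_3) = mx3 1 0 0 0 1 0 0 0 1.
Proof.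
apply/matrixP => r s; rewrite !mxE.
by case: (ord3P r) => [->|[->|->]]; case: (ord3P s) => [->|[->|->]].
Qed.

Lemma mx3_0 : (0 : 'M[K]_3) = mx3 0 0 0 0 0 0 0 0 0.
Proof.
apply/matrixP => r s; rewrite !mxE.
by case: (ord3P r) => [->|[->|->]]; case: (ord3P s) => [->|[->|->]].
Qed.

Lemma col3_0 : (0 : 'cV[K]_3) = col3 0 0 0.
Proof. apply/matrixP => r s; rewrite !mxE. by case: (ord3P r) => [->|[->|->]]. Qed.

Lemma mul_col3_row3 (a b c x y z : K) :
  col3 a b c *m (col3 x y z)^T = mx3 (a * x) (a * y) (a * z) (b * x) (b * y) (b * z) (c * x) (c * y) (c * z).
Proof.
apply/matrixP => r s; rewrite !mxE big_ord1 !mxE.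
by case: (ord3P r) => [->|[->|->]]; case: (ord3P s) => [->|[->|->]].
Qed.

Lemma det_mx3 (a b c d e f g h i : K) :
  \det (mx3 a b c d e f g h i) = a * (e * i - f * h) - b * (d * i - f * g) + c * (d * h - e * g).
Proof.
rewrite (expand_det_row _ o0) big3 /cofactor.
rewrite !(expand_det_row _ ord0) !big_ord_recl !big_ord0 /cofactor.
rewrite !(expand_det_row _ ord0) !big_ord_recl !big_ord0 /cofactor !det_mx00 !mxE /= /bump /=.
ring.
Qed.


End MX3.

Section Poly.
Variable R : realType.
Local Notation C := R[i].

Definition ispoly (g : C -> C) := exists p : {poly C}, forall z, g z = p.[z].

Lemma ispoly_ext g h : (forall z, g z = h z) -> ispoly h -> ispoly g.
Proof. by move=> E [p Hp]; exists p => z; rewrite E Hp. Qed.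
Lemma ispolyC (c : C) : ispoly (fun _ => c).
Proof. by exists c%:P => z; rewrite hornerC. Qed.
Lemma ispolyX : ispoly (fun z => z).
Proof. by exists 'X => z; rewrite hornerX. Qed.
Lemma ispolyD g h : ispoly g -> ispoly h -> ispoly (fun z => g z + h z).
Proof. by move=> [p Hp] [q Hq]; exists (p + q) => z; rewrite hornerD Hp Hq. Qed.
Lemma ispolyN g : ispoly g -> ispoly (fun z => - g z).
Proof. by move=> [p Hp]; exists (- p) => z; rewrite hornerN Hp. Qed.
Lemma ispolyM g h : ispoly g -> ispoly h -> ispoly (fun z => g z * h z).
Proof. by move=> [p Hp] [q Hq]; exists (p * q) => z; rewrite hornerM Hp Hq. Qed.
Lemma ispolyB g h : ispoly g -> ispoly h -> ispoly (fun z => g z - h z).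
Proof. by move=> Hg Hh; apply: ispolyD => //; apply: ispolyN. Qed.
Lemma ispolyXn g n : ispoly g -> ispoly (fun z => g z ^+ n).
Proof.
move=> Hg; elim: n => [|n IH]; first exact: (ispolyC 1).
by apply: ispoly_ext (ispolyM Hg IH) => z; rewrite exprS.
Qed.
Lemma ispolyMn g n : ispoly g -> ispoly (fun z => g z *+ n).
Proof.
move=> Hg; elim: n => [|n IH]; first exact: (ispolyC 0).
by apply: ispoly_ext (ispolyD Hg IH) => z; rewrite mulrS.
Qed.

Lemma ispoly_big (I : Type) (r : seq I) (P : pred I) (G : C -> I -> C) :
  (forall k, ispoly (fun z => G z k)) -> ispoly (fun z => \sum_(k <- r | P k) G z k).
Proof.
move=> HG; elim: r => [|a r IH].
  by apply: ispoly_ext (ispolyC 0) => z; rewrite big_nil.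
case Pa: (P a).
  by apply: ispoly_ext (ispolyD (HG a) IH) => z; rewrite big_cons Pa.
by apply: ispoly_ext IH => z; rewrite big_cons Pa.
Qed.

Definition ispolyMx m n (F : C -> 'M[C]_(m, n)) := forall i j, ispoly (fun z => F z i j).

Lemma ispolyMx_const m n (A : 'M[C]_(m, n)) : ispolyMx (fun _ => A).
Proof. by move=> i j; apply: ispolyC. Qed.
Lemma ispolyMxD m n (F G : C -> 'M[C]_(m, n)) :
  ispolyMx F -> ispolyMx G -> ispolyMx (fun z => F z + G z).
Proof. by move=> HF HG i j; apply: ispoly_ext (ispolyD (HF i j) (HG i j)) => z; rewrite mxE. Qed.
Lemma ispolyMxN m n (F : C -> 'M[C]_(m, n)) : ispolyMx F -> ispolyMx (fun z => - F z).
Proof. by move=> HF i j; apply: ispoly_ext (ispolyN (HF i j)) => z; rewrite mxE. Qed.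
Lemma ispolyMxZ m n g (F : C -> 'M[C]_(m, n)) :
  ispoly g -> ispolyMx F -> ispolyMx (fun z => g z *: F z).
Proof. by move=> Hg HF i j; apply: ispoly_ext (ispolyM Hg (HF i j)) => z; rewrite mxE. Qed.
Lemma ispolyMxT m n (F : C -> 'M[C]_(m, n)) : ispolyMx F -> ispolyMx (fun z => (F z)^T).
Proof. by move=> HF i j; apply: ispoly_ext (HF j i) => z; rewrite mxE. Qed.
Lemma ispolyMxM m n p (F : C -> 'M[C]_(m, n)) (G : C -> 'M[C]_(n, p)) :
  ispolyMx F -> ispolyMx G -> ispolyMx (fun z => F z *m G z).
Proof.
move=> HF HG i j.
apply: ispoly_ext (ispoly_big _ _ (G := fun z k => F z i k * G z k j) _) => [z|k].
  by rewrite mxE.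
exact: ispolyM.
Qed.
Lemma ispoly_col3 g h k : ispoly g -> ispoly h -> ispoly k ->
  ispolyMx (fun z => col3 (g z) (h z) (k z)).
Proof.
move=> Hg Hh Hk i j; case: (ord3P i) => [->|[->|->]].
- by apply: ispoly_ext Hg => z; rewrite col3E0.
- by apply: ispoly_ext Hh => z; rewrite col3E1.
- by apply: ispoly_ext Hk => z; rewrite col3E2.
Qed.
Lemma ispoly_mx3 a b c d e f g h k : ispoly a -> ispoly b -> ispoly c -> ispoly d ->
  ispoly e -> ispoly f -> ispoly g -> ispoly h -> ispoly k ->
  ispolyMx (fun z => mx3 (a z) (b z) (c z) (d z) (e z) (f z) (g z) (h z) (k z)).
Proof.
move=> Ha Hb Hc Hd He Hf Hg Hh Hk i j.
by case: (ord3P i) => [->|[->|->]]; case: (ord3P j) => [->|[->|->]];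
  (apply: ispoly_ext; [move=> z; rewrite mxE /=; reflexivity | by []]).
Qed.
Lemma ispoly_cdot (u v : C -> 'cV[C]_3) : ispolyMx u -> ispolyMx v ->
  ispoly (fun z => cdot (u z) (v z)).
Proof.
move=> Hu Hv; rewrite /cdot.
apply: ispoly_big => k; exact: ispolyM.
Qed.

Definition ispoly_pt (P : C -> pt R) :=
  [/\ ispoly (fun z => ph (P z)), ispolyMx (fun z => pM (P z)),
      ispolyMx (fun z => px (P z)), ispolyMx (fun z => py (P z)) &
      ispoly (fun z => pr (P z))].

Lemma ispoly_coords (P : C -> pt R) : ispoly_pt P -> forall k, ispoly (fun z => coords (P z) k).
Proof.
case=> Hh HM Hx Hy Hr k; rewrite /coords.
case: (val k == 0)%N => //.
case: (val k < 10)%N; first exact: HM.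
case: (val k < 13)%N; first exact: Hx.
case: (val k < 16)%N; first exact: Hy.
exact: Hr.
Qed.

Lemma poly_zero_nat (p : {poly C}) : (forall n : nat, p.[n.+1%:R] = 0) -> p = 0.
Proof.
move=> Hp; apply/eqP; apply/negPn/negP => nz.
pose rs := [seq (n.+1)%:R : C | n <- iota 0 (size p)].
have : (size rs < size p)%N.
  apply: max_poly_roots => //.
    by apply/allP => x /mapP [n _ ->]; rewrite /root Hp.
  rewrite map_inj_uniq ?iota_uniq // => m n /eqP.
  by rewrite eqr_nat eqSS => /eqP.
by rewrite size_map size_iota ltnn.
Qed.

Lemma meval_horner n (f : {mpoly C[n]}) (v : 'I_n -> {poly C}) :
  exists G : {poly C}, forall z, f.@[fun k => (v k).[z]] = G.[z].
Proof.
exists (\sum_(m <- msupp f) (f@_m)%:P * \prod_(i < n) v i ^+ m i) => z.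
rewrite mevalE -horner_evalE rmorph_sum /=; apply: eq_bigr => m _.
rewrite rmorphM /= horner_evalE hornerC rmorph_prod /=; congr (_ * _).
by apply: eq_bigr => i _; rewrite rmorphXn /= horner_evalE.
Qed.

Lemma ext_pt (f : {mpoly C[17]}) (P : C -> pt R) : ispoly_pt P ->
  (forall n : nat, f.@[coords (P n.+1%:R)] = 0) -> forall z, f.@[coords (P z)] = 0.
Proof.
move=> HP Hn.
have /fin_all_exists [v Hv] : forall k, exists p : {poly C}, forall z, coords (P z) k = p.[z].
  by move=> k; apply: ispoly_coords.
have [G HG] := meval_horner f v.
have E : forall z, f.@[coords (P z)] = G.[z].
  by move=> z; rewrite -HG; apply: meval_eq => k; rewrite Hv.
have G0 : G = 0 by apply: poly_zero_nat => n; rewrite -E Hn.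
by move=> z; rewrite E G0 horner0.
Qed.

Lemma meval_homog n d (f : {mpoly C[n]}) (c : C) (v : 'I_n -> C) :
  f \is d.-homog -> f.@[fun k => c * v k] = c ^+ d * f.@[v].
Proof.
move=> Hf; rewrite !mevalE big_distrr /=; apply: eq_big_seq => m Hm.
rewrite mulrCA; congr (_ * _).
have <- : mdeg m = d by apply: (dhomog_mf Hf).
rewrite mdegE -prodrXr -big_split /=; apply: eq_bigr => i _.
by rewrite exprMn.
Qed.

End Poly.

Ltac polystep := first [ apply: ispolyC | apply: ispolyX | apply: ispolyXn | apply: ispolyMn
  | apply: ispolyD | apply: ispolyN | apply: ispolyM | apply: ispolyMx_const | apply: ispolyMxD
  | apply: ispolyMxN | apply: ispolyMxZ | apply: ispolyMxT | apply: ispolyMxM | apply: ispoly_col3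
  | apply: ispoly_mx3 | apply: ispoly_cdot ].

Section Pts.
Variable R : realType.
Local Notation C := R[i].

Definition cpt (h : C) (Mh : 'M[C]_3) (y : 'cV[C]_3) : pt R :=
  Pt h Mh (- (Mh^T *m y)) (h *: y) (h * cdot y y).

Lemma coords_scale (l : C) (b : pt R) k : coords (pt_scale l b) k = l * coords b k.
Proof.
rewrite /coords /=; case: (val k == 0)%N => //.
case: (val k < 10)%N; first by rewrite mxE.
case: (val k < 13)%N; first by rewrite mxE.
case: (val k < 16)%N; first by rewrite mxE.
by [].
Qed.

Lemma meval_scale d (f : {mpoly C[17]}) l (b : pt R) : f \is d.-homog ->
  f.@[coords (pt_scale l b)] = l ^+ d * f.@[coords b].
Proof.
move=> Hf; rewrite -meval_homog //; apply: meval_eq => k; exact: coords_scale.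
Qed.

Lemma cpt_isom (h : C) (M : 'M[R]_3) (y : 'cV[R]_3) :
  cpt h (h *: cmat M) (cvec y) = pt_scale h (isom_pt M y).
Proof.
rewrite /cpt /isom_pt /pt_scale /=; congr Pt.
- by rewrite mulr1.
- by rewrite linearZ /= -scalemxAl scalerN.
Qed.

Lemma map_mx3 (f : R -> C) a b c d e g h k l :
  map_mx f (mx3 a b c d e g h k l) = mx3 (f a) (f b) (f c) (f d) (f e) (f g) (f h) (f k) (f l).
Proof.
apply/matrixP => r s; rewrite !mxE.
by case: (ord3P r) => [->|[->|->]]; case: (ord3P s) => [->|[->|->]].
Qed.

Lemma map_col3 (f : R -> C) a b c : map_mx f (col3 a b c) = col3 (f a) (f b) (f c).
Proof. apply/matrixP => r s; rewrite !mxE. by case: (ord3P r) => [->|[->|->]]. Qed.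

Definition MsC (a b : C) : 'M[C]_3 :=
  mx3 (a^+2 - b^+2) (- (2%:R * a * b)) 0 (2%:R * a * b) (a^+2 - b^+2) 0 0 0 (a^+2 + b^+2).
Definition MsR (a b : R) : 'M[R]_3 :=
  mx3 (a^+2 - b^+2) (- (2%:R * a * b)) 0 (2%:R * a * b) (a^+2 - b^+2) 0 0 0 (a^+2 + b^+2).

Lemma cmat_MsR a b : cmat (MsR a b) = MsC a%:C b%:C.
Proof. by rewrite /cmat /MsR map_mx3 /= !(rmorphD, rmorphN, rmorphM, rmorphXn, rmorph0, rmorph_nat). Qed.

Lemma rotation_Ms (a b : R) : a^+2 + b^+2 != 0 -> is_rotation ((a^+2 + b^+2)^-1 *: MsR a b).
Proof.
move=> nz; split.
- rewrite /MsR scale_mx3 tr_mx3 mul_mx3 mx3_1.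
  by congr mx3; field.
- by rewrite /MsR scale_mx3 det_mx3; field.
Qed.

Lemma is_rotationM (A B : 'M[R]_3) : is_rotation A -> is_rotation B -> is_rotation (A *m B).
Proof.
move=> [HA dA] [HB dB]; split.
- by rewrite trmx_mul mulmxA -(mulmxA _ A^T) HA mulmx1 HB.
- by rewrite det_mulmx dA dB mulr1.
Qed.

Section Stage1.
Variable G : 'M[R]_3.
Hypothesis HG : is_rotation G.
Variable d : nat.
Variable f : {mpoly C[17]}.
Hypothesis Hf : f \is d.-homog.
Hypothesis Hvan : forall (M : 'M[R]_3) (y : 'cV[R]_3), is_rotation M -> f.@[coords (isom_pt M y)] = 0.

Lemma stage1_real (a b : R) (y : 'cV[R]_3) :
  f.@[coords (cpt (a%:C^+2 + b%:C^+2) (cmat G *m MsC a%:C b%:C) (cvec y))] = 0.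
Proof.
have Eh : a%:C^+2 + b%:C^+2 = (a^+2 + b^+2)%:C by rewrite rmorphD !rmorphXn.
have [h0|nz] := eqVneq (a^+2 + b^+2) 0.
  have [a0 b0] : a = 0 /\ b = 0.
    move/eqP: h0; rewrite paddr_eq0 ?sqr_ge0 // !sqrf_eq0 => /andP[/eqP -> /eqP ->] //.
  have -> : cmat G *m MsC a%:C b%:C = (a%:C^+2 + b%:C^+2) *: cmat G.
    rewrite a0 b0 rmorph0 /MsC; rewrite (mx3P (cmat G)) mul_mx3 scale_mx3.
    by congr mx3; ring.
  by rewrite cpt_isom (meval_scale _ _ Hf) Hvan // mulr0.
pose M := G *m ((a^+2 + b^+2)^-1 *: MsR a b).
have -> : cmat G *m MsC a%:C b%:C = (a%:C^+2 + b%:C^+2) *: cmat M.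
  rewrite Eh /M /cmat map_mxM map_mxZ /= -cmat_MsR -scalemxAr scalerA.
  by rewrite -rmorphM mulfV // rmorph1 scale1r.
rewrite cpt_isom (meval_scale _ _ Hf) Hvan ?mulr0 //.
by apply: is_rotationM => //; exact: rotation_Ms.
Qed.


Ltac polypt := rewrite /ispoly_pt /cpt /MsC /=; split; repeat polystep.

Lemma natC (n : nat) : (n%:R : C) = (n%:R : R)%:C.
Proof. by rewrite rmorph_nat. Qed.

Lemma stage1 (a b : C) (y : 'cV[C]_3) :
  f.@[coords (cpt (a^+2 + b^+2) (cmat G *m MsC a b) y)] = 0.
Proof.
rewrite (col3P y); move: (y o0 0) (y o1 0) (y o2 0) => y0 y1 y2.
have S0 : forall (a b y0 y1 y2 : R), f.@[coords (cpt (a%:C^+2 + b%:C^+2)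
   (cmat G *m MsC a%:C b%:C) (col3 y0%:C y1%:C y2%:C))] = 0.
  by move=> a' b' z0 z1 z2; rewrite -(map_col3 (fun x => x%:C)); apply: stage1_real.
have S1 : forall (a b y1 y2 : R) (z0 : C), f.@[coords (cpt (a%:C^+2 + b%:C^+2)
   (cmat G *m MsC a%:C b%:C) (col3 z0 y1%:C y2%:C))] = 0.
  move=> a' b' z1 z2; apply: (ext_pt (P := fun z => cpt (a'%:C^+2 + b'%:C^+2)
   (cmat G *m MsC a'%:C b'%:C) (col3 z z1%:C z2%:C))); first by polypt.
  by move=> n; rewrite natC; apply: S0.
have S2 : forall (a b y2 : R) (z0 z1 : C), f.@[coords (cpt (a%:C^+2 + b%:C^+2)
   (cmat G *m MsC a%:C b%:C) (col3 z0 z1 y2%:C))] = 0.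
  move=> a' b' z2 z0; apply: (ext_pt (P := fun z => cpt (a'%:C^+2 + b'%:C^+2)
   (cmat G *m MsC a'%:C b'%:C) (col3 z0 z z2%:C))); first by polypt.
  by move=> n; rewrite natC; apply: S1.
have S3 : forall (a b : R) (z0 z1 z2 : C), f.@[coords (cpt (a%:C^+2 + b%:C^+2)
   (cmat G *m MsC a%:C b%:C) (col3 z0 z1 z2))] = 0.
  move=> a' b' z0 z1; apply: (ext_pt (P := fun z => cpt (a'%:C^+2 + b'%:C^+2)
   (cmat G *m MsC a'%:C b'%:C) (col3 z0 z1 z))); first by polypt.
  by move=> n; rewrite natC; apply: S2.
have S4 : forall (b : R) (z0 z1 z2 a : C), f.@[coords (cpt (a^+2 + b%:C^+2)
   (cmat G *m MsC a b%:C) (col3 z0 z1 z2))] = 0.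
  move=> b' z0 z1 z2; apply: (ext_pt (P := fun z => cpt (z^+2 + b'%:C^+2)
   (cmat G *m MsC z b'%:C) (col3 z0 z1 z2))); first by polypt.
  by move=> n; rewrite natC; apply: S3.
have S5 : forall (z0 z1 z2 a b : C), f.@[coords (cpt (a^+2 + b^+2)
   (cmat G *m MsC a b) (col3 z0 z1 z2))] = 0.
  move=> z0 z1 z2 a'; apply: (ext_pt (P := fun z => cpt (a'^+2 + z^+2)
   (cmat G *m MsC a' z) (col3 z0 z1 z2))); first by polypt.
  by move=> n; rewrite natC; apply: S4.
exact: S5.
Qed.

End Stage1.
End Pts.

Section Stage2.
Variable R : realType.
Local Notation C := R[i].

Lemma sqr_iC : ('i : C) ^+ 2 = -1. Proof. exact: sqrCi. Qed.
Lemma projE (a b : R) : (a +i* b) = a%:C + 'i * b%:C.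
Proof. by apply/eqP; rewrite eq_complex /= !mul0r !mul1r !subr0 !addr0 !add0r !eqxx. Qed.
Lemma i_neq0 : ('i : C) != 0.
Proof. by apply/eqP => /eqP; rewrite eq_complex /= oner_eq0 andbF. Qed.
Lemma realC_inj (x y : R) : x%:C = y%:C -> x = y.
Proof. by case. Qed.
Lemma real_neq_2i (x : R) : x%:C - 2%:R * 'i != 0.
Proof.
apply/eqP => H.
have Hi : ('i : C) ^+ 2 = -1 by exact: sqrCi.
have : (x^+2 + 4%:R)%:C = 0%:C.
  rewrite rmorphD rmorphXn rmorph_nat /=.
  have -> : x%:C = 2%:R * 'i by apply/eqP; rewrite -subr_eq0 H.
  by rewrite rmorph0; ring: Hi.
move/realC_inj/eqP; rewrite gt_eqF //.
by apply: (lt_le_trans (y := 4%:R)); rewrite ?ltr0n // lerDr sqr_ge0.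
Qed.
End Stage2.

Section Stage2b.
Variable R : realType.
Local Notation C := R[i].

Lemma cdot_col3 (a b c a' b' c' : C) : cdot (col3 a b c) (col3 a' b' c') = a * a' + b * b' + c * c'.
Proof. by rewrite /cdot big3 !mxE. Qed.

Definition Dm : 'M[R]_3 := mx3 1 0 0 0 (-1) 0 0 0 (-1).
Lemma rot_Dm : is_rotation Dm.
Proof.
split; first by rewrite /Dm tr_mx3 mul_mx3 mx3_1; congr mx3; ring.
by rewrite /Dm det_mx3; ring.
Qed.
Lemma rot_1 : is_rotation (1%:M : 'M[R]_3).
Proof. by split; rewrite ?trmx1 ?mulmx1 ?det1. Qed.
Lemma cmat_Dm : cmat Dm = mx3 1 0 0 0 (-1) 0 0 0 (-1).
Proof. by rewrite /cmat /Dm map_mx3 /= rmorphN !rmorph1 rmorph0. Qed.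
Lemma cmat_1 : cmat (1%:M : 'M[R]_3) = mx3 1 0 0 0 1 0 0 0 1.
Proof. by rewrite mx3_1 /cmat map_mx3 /= !rmorph1 rmorph0. Qed.

Definition ev : 'cV[C]_3 := col3 1 'i 0.
Definition Em : 'M[C]_3 := mx3 1 'i 0 'i (-1) 0 0 0 0.
Definition binv (m xi eta r : C) : pt R := Pt 0 (m *: Em) (xi *: ev) (eta *: ev) r.
Definition bsim (xi eta r : C) : pt R := Pt 0 0 (xi *: ev) (eta *: ev) r.

Definition Phinv (eta s c2 e : C) : pt R :=
  Pt ((e^+2 - 2%:R * 'i) * (1^+2 + (- 'i + e^+2)^+2))
     ((e^+2 - 2%:R * 'i) *: (cmat Dm *m MsC 1 (- 'i + e^+2)))
     (col3 (- (c2 * (2%:R + 2%:R * 'i * e^+2 - (e^+2)^+2)) + e^+2 * eta)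
           (- (2%:R * 'i * c2) + 2%:R * e^+2 * c2 - 'i * e^+2 * eta)
           ((e^+2 - 2%:R * 'i) * e * s))
     ((e^+2 - 2%:R * 'i) *: col3 (eta + e^+2 * c2) ('i * eta) (e * s))
     (2%:R * eta * c2 + s^+2 + e^+2 * c2^+2).

Definition Phsim (a b eta w e : C) : pt R :=
  Pt (e * (a^+2 + b^+2)) (e *: (cmat 1%:M *m MsC a b))
     (- ((cmat 1%:M *m MsC a b)^T *m col3 (eta + e * w) ('i * eta) 0))
     ((a^+2 + b^+2) *: col3 (eta + e * w) ('i * eta) 0)
     ((a^+2 + b^+2) * (2%:R * eta * w + e * w^+2)).

Lemma Phinv_eq (eta s c2 e : C) : e != 0 -> e^+2 - 2%:R * 'i != 0 ->
  Phinv eta s c2 e = pt_scale (e^+2 - 2%:R * 'i)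
    (cpt (1^+2 + (- 'i + e^+2)^+2) (cmat Dm *m MsC 1 (- 'i + e^+2))
         ((1^+2 + (- 'i + e^+2)^+2)^-1 *: col3 (eta + e^+2 * c2) ('i * eta) (e * s))).
Proof.
move=> ne nm.
have Hi : ('i : C) ^+ 2 = -1 by exact: sqrCi.
have Eh : 1^+2 + (- 'i + e^+2)^+2 = e^+2 * (e^+2 - 2%:R * 'i) :> C by ring: Hi.
have nh : 1^+2 + (- 'i + e^+2)^+2 != 0 :> C by rewrite Eh mulf_neq0 // expf_neq0.
rewrite /Phinv /pt_scale /cpt /=; congr Pt.
- rewrite cmat_Dm /MsC mul_mx3 tr_mx3 scale_col3 mul_mx3c opp_col3 scale_col3.
  rewrite Eh; congr col3; field: Hi; by rewrite nm ne.
- by rewrite !scalerA mulfK.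
- rewrite scale_col3 cdot_col3 Eh; field: Hi; by rewrite nm ne.
Qed.

Lemma Phinv0 (eta s c2 : C) :
  Phinv eta s c2 0 = binv (- (4%:R * 'i)) (- (2%:R * c2)) (- (2%:R * 'i * eta)) (2%:R * eta * c2 + s^+2).
Proof.
have Hi : ('i : C) ^+ 2 = -1 by exact: sqrCi.
rewrite /Phinv /binv; congr Pt.
- by ring: Hi.
- by rewrite cmat_Dm /MsC mul_mx3 !scale_mx3 /Em; congr mx3; ring: Hi.
- by rewrite /ev scale_col3; congr col3; ring: Hi.
- by rewrite /ev !scale_col3; congr col3; ring: Hi.
- by ring.
Qed.

Lemma Phsim_eq (a b eta w e : C) : e != 0 ->
  Phsim a b eta w e = pt_scale e (cpt (a^+2 + b^+2) (cmat 1%:M *m MsC a b)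
     (e^-1 *: col3 (eta + e * w) ('i * eta) 0)).
Proof.
move=> ne; have Hi : ('i : C) ^+ 2 = -1 by exact: sqrCi.
rewrite /Phsim /pt_scale /cpt /=; congr Pt.
- by rewrite -scalemxAr scalerN scalerA mulfV // scale1r.
- by rewrite !scalerA; congr (_ *: _); field.
- by rewrite scale_col3 cdot_col3; field: Hi.
Qed.

Lemma Phsim0 (a b eta w : C) :
  Phsim a b eta w 0 = bsim (- ((a + 'i * b)^+2 * eta)) ((a^+2 + b^+2) * eta)
     ((a^+2 + b^+2) * (2%:R * eta * w)).
Proof.
have Hi : ('i : C) ^+ 2 = -1 by exact: sqrCi.
rewrite /Phsim /bsim; congr Pt.
- by rewrite mul0r.
- by rewrite scale0r.
- rewrite cmat_1 /MsC mul_mx3 tr_mx3 mul_mx3c opp_col3 /ev scale_col3.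
  by congr col3; ring: Hi.
- by rewrite /ev !scale_col3; congr col3; ring: Hi.
- by ring.
Qed.

End Stage2b.
Arguments ev {R}.
Arguments Em {R}.
Arguments Dm {R}.

Section Rel.
Variable R : realType.
Local Notation C := R[i].

Lemma valinord (k : nat) : (k < 17)%N -> val (inord k : 'I_17) = k.
Proof. exact: inordK. Qed.

Lemma coords0 (b : pt R) : coords b (inord 0) = ph b.
Proof. by rewrite /coords valinord. Qed.
Lemma coords1 (b : pt R) : coords b (inord 1) = pM b o0 o0.
Proof. rewrite /coords valinord //=; congr (_ _ _); try (apply/val_inj; rewrite /= inordK //). Qed.
Lemma coords2 (b : pt R) : coords b (inord 2) = pM b o0 o1.
Proof. rewrite /coords valinord //=; congr (_ _ _); try (apply/val_inj; rewrite /= inordK //). Qed.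
Lemma coords3 (b : pt R) : coords b (inord 3) = pM b o0 o2.
Proof. rewrite /coords valinord //=; congr (_ _ _); try (apply/val_inj; rewrite /= inordK //). Qed.
Lemma coords4 (b : pt R) : coords b (inord 4) = pM b o1 o0.
Proof. rewrite /coords valinord //=; congr (_ _ _); try (apply/val_inj; rewrite /= inordK //). Qed.
Lemma coords5 (b : pt R) : coords b (inord 5) = pM b o1 o1.
Proof. rewrite /coords valinord //=; congr (_ _ _); try (apply/val_inj; rewrite /= inordK //). Qed.
Lemma coords6 (b : pt R) : coords b (inord 6) = pM b o1 o2.
Proof. rewrite /coords valinord //=; congr (_ _ _); try (apply/val_inj; rewrite /= inordK //). Qed.
Lemma coords7 (b : pt R) : coords b (inord 7) = pM b o2 o0.
Proof. rewrite /coords valinord //=; congr (_ _ _); try (apply/val_inj; rewrite /= inordK //). Qed.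
Lemma coords8 (b : pt R) : coords b (inord 8) = pM b o2 o1.
Proof. rewrite /coords valinord //=; congr (_ _ _); try (apply/val_inj; rewrite /= inordK //). Qed.
Lemma coords9 (b : pt R) : coords b (inord 9) = pM b o2 o2.
Proof. rewrite /coords valinord //=; congr (_ _ _); try (apply/val_inj; rewrite /= inordK //). Qed.
Lemma coords10 (b : pt R) : coords b (inord 10) = px b o0 0.
Proof. rewrite /coords valinord //=; congr (_ _ _); try (apply/val_inj; rewrite /= inordK //). Qed.
Lemma coords11 (b : pt R) : coords b (inord 11) = px b o1 0.
Proof. rewrite /coords valinord //=; congr (_ _ _); try (apply/val_inj; rewrite /= inordK //). Qed.
Lemma coords12 (b : pt R) : coords b (inord 12) = px b o2 0.
Proof. rewrite /coords valinord //=; congr (_ _ _); try (apply/val_inj; rewrite /= inordK //). Qed.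
Lemma coords13 (b : pt R) : coords b (inord 13) = py b o0 0.
Proof. rewrite /coords valinord //=; congr (_ _ _); try (apply/val_inj; rewrite /= inordK //). Qed.
Lemma coords14 (b : pt R) : coords b (inord 14) = py b o1 0.
Proof. rewrite /coords valinord //=; congr (_ _ _); try (apply/val_inj; rewrite /= inordK //). Qed.
Lemma coords15 (b : pt R) : coords b (inord 15) = py b o2 0.
Proof. rewrite /coords valinord //=; congr (_ _ _); try (apply/val_inj; rewrite /= inordK //). Qed.
Lemma coords16 (b : pt R) : coords b (inord 16) = pr b.
Proof. by rewrite /coords valinord. Qed.

Definition XX (k : nat) : {mpoly C[17]} := 'X_(inord k).

Lemma XX_homog k : XX k \is 1.-homog.
Proof. by rewrite /XX dhomogX /= mdeg1. Qed.
Lemma XX2_homog k l : XX k * XX l \is 2.-homog.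
Proof. exact: (dhomogM (XX_homog k) (XX_homog l)). Qed.

Definition F1 := XX 0 * XX 13 + (XX 1 * XX 10 + XX 2 * XX 11 + XX 3 * XX 12).
Definition F2 := XX 0 * XX 10 + (XX 1 * XX 13 + XX 4 * XX 14 + XX 7 * XX 15).
Definition F3 := XX 10 * XX 10 + XX 11 * XX 11 + XX 12 * XX 12 - XX 0 * XX 16.
Definition F4 := XX 13 * XX 13 + XX 14 * XX 14 + XX 15 * XX 15 - XX 0 * XX 16.

Lemma F1_homog : F1 \is 2.-homog.
Proof. by rewrite /F1 !rpredD // XX2_homog. Qed.
Lemma F2_homog : F2 \is 2.-homog.
Proof. by rewrite /F2 !rpredD // XX2_homog. Qed.
Lemma F3_homog : F3 \is 2.-homog.
Proof. by rewrite /F3 rpredB ?rpredD // XX2_homog. Qed.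
Lemma F4_homog : F4 \is 2.-homog.
Proof. by rewrite /F4 rpredB ?rpredD // XX2_homog. Qed.

Lemma mevalXX (b : pt R) k : (XX k).@[coords b] = coords b (inord k).
Proof. by rewrite /XX mevalXU. Qed.

Lemma cdotE (u v : 'cV[C]_3) : cdot u v = (u^T *m v) 0 0.
Proof. by rewrite /cdot mxE; apply: eq_bigr => k _; rewrite mxE. Qed.

Lemma cdotNN (u v : 'cV[C]_3) : cdot (- u) (- v) = cdot u v.
Proof. by rewrite /cdot; apply: eq_bigr => k _; rewrite !mxE mulrNN. Qed.

Lemma F1E (b : pt R) : F1.@[coords b] = (ph b *: py b + pM b *m px b) o0 0.
Proof.
rewrite /F1 !(mevalD, mevalM, mevalXX) coords0 coords1 coords2 coords3 coords10 coords11 coords12 coords13.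
by rewrite !mxE big3 ?mxE.
Qed.
Lemma F2E (b : pt R) : F2.@[coords b] = (ph b *: px b + (pM b)^T *m py b) o0 0.
Proof.
rewrite /F2 !(mevalD, mevalM, mevalXX) coords0 coords1 coords4 coords7 coords10 coords13 coords14 coords15.
by rewrite !mxE big3 ?mxE.
Qed.
Lemma F3E (b : pt R) : F3.@[coords b] = cdot (px b) (px b) - ph b * pr b.
Proof.
rewrite /F3 !(mevalB, mevalD, mevalM, mevalXX) coords0 coords10 coords11 coords12 coords16.
by rewrite /cdot big3.
Qed.
Lemma F4E (b : pt R) : F4.@[coords b] = cdot (py b) (py b) - ph b * pr b.
Proof.
rewrite /F4 !(mevalB, mevalD, mevalM, mevalXX) coords0 coords13 coords14 coords15 coords16.
by rewrite /cdot big3.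
Qed.

Lemma isom_AAT (M : 'M[R]_3) : is_rotation M -> cmat M *m (cmat M)^T = 1%:M.
Proof.
case=> H _; apply: mulmx1C.
by rewrite /cmat map_trmx -map_mxM H map_mx1.
Qed.

Lemma F_isom (M : 'M[R]_3) (y : 'cV[R]_3) : is_rotation M ->
  [/\ F1.@[coords (isom_pt M y)] = 0, F2.@[coords (isom_pt M y)] = 0,
      F3.@[coords (isom_pt M y)] = 0 & F4.@[coords (isom_pt M y)] = 0].
Proof.
move=> HM; have AAT := isom_AAT HM.
rewrite F1E F2E F3E F4E /isom_pt /=; split.
- by rewrite scale1r mulmxN mulmxA AAT mul1mx subrr mxE.
- by rewrite scale1r addNr mxE.
- by rewrite cdotNN !cdotE trmx_mul trmxK mulmxA -(mulmxA _ (cmat M)) AAT mulmx1 mul1r subrr.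
- by rewrite mul1r subrr.
Qed.

Lemma inX_van (b : pt R) d (f : {mpoly C[17]}) : inX b -> f \is d.-homog ->
  (forall M y, is_rotation M -> f.@[coords (isom_pt M y)] = 0) -> f.@[coords b] = 0.
Proof. by case=> _ H; apply: H. Qed.

Lemma X_rel (b : pt R) : inX b -> ph b = 0 ->
  [/\ (pM b *m px b) o0 0 = 0, ((pM b)^T *m py b) o0 0 = 0,
      cdot (px b) (px b) = 0 & cdot (py b) (py b) = 0].
Proof.
move=> HX h0.
have := inX_van HX F1_homog (fun M y H => let: And4 x _ _ _ := F_isom y H in x).
have := inX_van HX F2_homog (fun M y H => let: And4 _ x _ _ := F_isom y H in x).
have := inX_van HX F3_homog (fun M y H => let: And4 _ _ x _ := F_isom y H in x).
have := inX_van HX F4_homog (fun M y H => let: And4 _ _ _ x := F_isom y H in x).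
rewrite F1E F2E F3E F4E h0 !scale0r !add0r !mul0r !subr0.
by move=> -> -> -> ->.
Qed.

End Rel.

Section Stage2c.
Variable R : realType.
Local Notation C := R[i].

Ltac polypt2 := rewrite /ispoly_pt /=; split; repeat polystep.

Section Van.
Variable d : nat.
Variable f : {mpoly C[17]}.
Hypothesis Hf : f \is d.-homog.
Hypothesis Hvan : forall (M : 'M[R]_3) (y : 'cV[R]_3), is_rotation M -> f.@[coords (isom_pt M y)] = 0.

Lemma natn0 (n : nat) : (n.+1%:R : C) != 0.
Proof. by rewrite pnatr_eq0. Qed.

Lemma van_binv (eta s c2 : C) :
  f.@[coords (binv (- (4%:R * 'i)) (- (2%:R * c2)) (- (2%:R * 'i * eta)) (2%:R * eta * c2 + s^+2))] = 0.
Proof.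
rewrite -Phinv0.
apply: (ext_pt (P := Phinv eta s c2)) => [|n].
  by rewrite /Phinv /MsC; polypt2.
have nm : (n.+1%:R : C)^+2 - 2%:R * 'i != 0.
  by rewrite natC -rmorphXn; apply: real_neq_2i.
rewrite (Phinv_eq _ _ _ (natn0 n) nm) (meval_scale _ _ Hf).
by rewrite (stage1 (@rot_Dm R) Hf Hvan) mulr0.
Qed.

Lemma van_bsim (a b eta w : C) :
  f.@[coords (bsim (- ((a + 'i * b)^+2 * eta)) ((a^+2 + b^+2) * eta)
     ((a^+2 + b^+2) * (2%:R * eta * w)))] = 0.
Proof.
rewrite -Phsim0.
apply: (ext_pt (P := Phsim a b eta w)) => [|n].
  by rewrite /Phsim /MsC; polypt2.
rewrite (Phsim_eq _ _ _ _ (natn0 n)) (meval_scale _ _ Hf).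
by rewrite (stage1 (@rot_1 R) Hf Hvan) mulr0.
Qed.

End Van.

Lemma inX_binv (eta s c2 : C) :
  inX (binv (- (4%:R * 'i)) (- (2%:R * c2)) (- (2%:R * 'i * eta)) (2%:R * eta * c2 + s^+2)).
Proof.
rewrite /inX; split; last by move=> d f Hf Hvan; apply: (van_binv Hf Hvan).
exists (inord 1); rewrite coords1 /binv /= mxE /Em mxE /= mulr1 oppr_eq0.
by rewrite mulf_neq0 ?pnatr_eq0 ?i_neq0.
Qed.

Lemma inX_bsim (a b eta w : C) : (a^+2 + b^+2) * eta != 0 ->
  inX (bsim (- ((a + 'i * b)^+2 * eta)) ((a^+2 + b^+2) * eta)
     ((a^+2 + b^+2) * (2%:R * eta * w))).
Proof.
move=> nz; rewrite /inX; split; last by move=> d f Hf Hvan; apply: (van_bsim Hf Hvan).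
by exists (inord 13); rewrite coords13 /bsim /= /ev scale_col3 col3E0 mulr1.
Qed.

End Stage2c.

Section SmapS.
Variable R : realType.
Local Notation C := R[i].

Lemma ord3_0 : (0 : 'I_3) = o0. Proof. by apply/val_inj. Qed.
Lemma ord3_1 : (1 : 'I_3) = o1. Proof. by apply/val_inj. Qed.
Lemma ord3_2 : (2%:R : 'I_3) = o2. Proof. by apply/val_inj. Qed.

Lemma one_neq_m1 : (1 : R) != -1.
Proof.
apply/eqP => H; have : (0 : R) < 1 + 1 by apply: addr_gt0; apply: ltr01.
by rewrite {2}H subrr ltxx.
Qed.

Lemma stereo_aux (z : C) :
  (complex.Re z ^+ 2 + complex.Im z ^+ 2 - 1) / (complex.Re z ^+ 2 + complex.Im z ^+ 2 + 1) = -1 -> z = 0.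
Proof.
set n := complex.Re z ^+ 2 + complex.Im z ^+ 2.
have n0 : 0 <= n by apply: addr_ge0; apply: sqr_ge0.
have n1 : n + 1 != 0 by rewrite gt_eqF // (ltr_wpDl n0 ltr01).
move/(congr1 (fun x => x * (n + 1))); rewrite divfK // mulN1r => /eqP.
move=> /eqP E; have nn : n = 0 by lra.
have : complex.Re z ^+ 2 + complex.Im z ^+ 2 == 0 by rewrite -/n nn.
rewrite paddr_eq0 ?sqr_ge0 // !sqrf_eq0 => /andP [/eqP re /eqP im].
by rewrite [z]complexE re im mulr0 addr0.
Qed.

Lemma inv_stereo_south (s t : C) : inv_stereo s t = south R -> s != 0 /\ t = 0.
Proof.
rewrite /inv_stereo /south; case: eqP => [_ [] /eqP|/eqP ns]; first by rewrite (negbTE one_neq_m1).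
move=> [_ _] /stereo_aux /eqP; rewrite mulf_eq0 invr_eq0 (negbTE ns) orbF => /eqP ->.
by [].
Qed.

Lemma Smap_col3 (a b c : C) :
  Smap (col3 a b c) = if ('i * a + b != 0) || (c != 0) then inv_stereo (a - 'i * b) c
                      else inv_stereo c (- a - 'i * b).
Proof. by rewrite /Smap ord3_2 ord3_0 ord3_1 col3E0 col3E1 col3E2. Qed.

Lemma iso_e (x0 x1 x2 : C) : x0 + 'i * x1 = 0 -> x0 * x0 + x1 * x1 + x2 * x2 = 0 ->
  col3 x0 x1 x2 = x0 *: ev.
Proof.
move=> H1 H2; have Hi : ('i : C) ^+ 2 = -1 by exact: sqrCi.
have E0 : x0 = - ('i * x1) by apply/eqP; rewrite -addr_eq0 H1.
have E1 : x1 = 'i * x0 by rewrite E0 mulrN mulrA -expr2 Hi mulN1r opprK.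
have E2 : x2 = 0.
  have H : x2 ^+ 2 = 0.
    have -> : x2 ^+ 2 = x0 * x0 + x1 * x1 + x2 * x2 - (x0 * x0 + x1 * x1) by ring.
    by rewrite H2 E1 sub0r; ring: Hi.
  by move/eqP: H; rewrite expf_eq0 => /andP [_ /eqP].
by rewrite /ev scale_col3 mulr1 mulr0 E2 E1 (mulrC x0).
Qed.

Lemma Smap_south (u : 'cV[C]_3) : isotropic u -> Smap u = south R ->
  u = (u o0 0) *: ev /\ u o0 0 != 0.
Proof.
have Hi : ('i : C) ^+ 2 = -1 by exact: sqrCi.
rewrite /isotropic (col3P u) cdot_col3 Smap_col3 col3E0.
move: (u o0 0) (u o1 0) (u o2 0) => a b c Hiso.
case: ifP => [_ /inv_stereo_south [ns c0]|/negbT].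
  have Hab : a + 'i * b = 0.
    apply/eqP; rewrite -(mulIr_eq0 _ (rregP ns)) -subr_eq0 subr0; apply/eqP.
    rewrite -Hiso c0; ring: Hi.
  have E := iso_e Hab Hiso; split => //.
  apply: contra ns => /eqP a0.
  have b0 : b = 0.
    have : 'i * (a + 'i * b) = 0 by rewrite Hab mulr0.
    by rewrite a0 add0r mulrA -expr2 Hi mulN1r => /eqP; rewrite oppr_eq0 => /eqP.
  by rewrite a0 b0 mulr0 subr0.
rewrite negb_or !negbK => /andP [_ /eqP c0].
by rewrite c0 => /inv_stereo_south [] /eqP.
Qed.

Lemma Smap_ev (a : C) : a != 0 -> Smap (a *: ev) = south R.
Proof.
move=> na; have Hi : ('i : C) ^+ 2 = -1 by exact: sqrCi.
have n2 : (2%:R : C) != 0 by rewrite pnatr_eq0.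
rewrite /ev scale_col3 mulr1 mulr0 Smap_col3.
have -> : 'i * a + a * 'i = 2%:R * 'i * a by ring.
rewrite mulf_neq0 ?mulf_neq0 ?i_neq0 //=.
have -> : a - 'i * (a * 'i) = 2%:R * a by ring: Hi.
rewrite /inv_stereo mulf_eq0 (negbTE n2) (negbTE na) /= mul0r /=.
by rewrite /south !expr0n /= !(mulr0, mul0r, addr0, add0r, sub0r, divr1).
Qed.

End SmapS.

Section Rep.
Variable R : realType.
Local Notation C := R[i].

Lemma Hi_ : ('i : C) ^+ 2 = -1. Proof. exact: sqrCi. Qed.

Lemma ev_Em : ev *m ev^T = Em :> 'M[C]_3.
Proof. by rewrite /ev mul_col3_row3 /Em; congr mx3; rewrite ?mulr1 ?mul1r ?mulr0 ?mul0r // -expr2 Hi_. Qed.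

Lemma Nmat_binv (m xi eta r : C) : Nmat (binv m xi eta r) = (r * m + 2%:R * xi * eta) *: Em.
Proof.
rewrite /Nmat /binv /= /ev /Em !scale_col3 mul_col3_row3 !scale_mx3 add_mx3.
by congr mx3; ring: Hi_.
Qed.

Lemma Em_neq0 (m : C) : m != 0 -> m *: Em != 0 :> 'M[C]_3.
Proof.
move=> nm; apply/eqP => /(congr1 (fun A : 'M[C]_3 => A o0 o0)).
by rewrite !mxE /= mulr1 => /eqP; rewrite (negbTE nm).
Qed.

Lemma ev_neq0 (m : C) : m != 0 -> m *: ev != 0 :> 'cV[C]_3.
Proof.
move=> nm; apply/eqP => /(congr1 (fun A : 'cV[C]_3 => A o0 0)).
by rewrite !mxE /= mulr1 => /eqP; rewrite (negbTE nm).
Qed.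

Lemma pt_eta (b : pt R) : b = Pt (ph b) (pM b) (px b) (py b) (pr b).
Proof. by case: b. Qed.

Lemma rep_inv (b : pt R) : inversion_point b -> left_right_ib b (south R) (south R) ->
  exists m xi eta r, [/\ m != 0, r * m + 2%:R * xi * eta != 0 & b = binv m xi eta r].
Proof.
case=> [[HX h0] [Mnz Nnz]] [v [w [vnz [wnz [iv [iw [HM [Sw Sv]]]]]]]].
have [Ev v0] := Smap_south iv Sv.
have [Ew w0] := Smap_south iw Sw.
have EM : pM b = (v o0 0 * w o0 0) *: Em.
  rewrite HM; move: Ev Ew; move: (v o0 0) (w o0 0) => a c -> ->.
  rewrite /ev !scale_col3 mul_col3_row3 /Em scale_mx3.
  by congr mx3; ring: Hi_.
move: EM (mulf_neq0 v0 w0); move: (v o0 0 * w o0 0) => m EM nm.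
have [R1 R2 R3 R4] := X_rel HX h0.
have Ex : px b = (px b o0 0) *: ev.
  move: R1 R3; rewrite EM (col3P (px b)) /Em scale_mx3 mul_mx3c col3E0 cdot_col3 col3E0.
  move: (px b o0 0) (px b o1 0) (px b o2 0) => x0 x1 x2 R1 R3; apply: iso_e R3.
  apply: (mulfI nm); rewrite mulr0 -R1; ring.
have Ey : py b = (py b o0 0) *: ev.
  move: R2 R4; rewrite EM (col3P (py b)) /Em scale_mx3 tr_mx3 mul_mx3c col3E0 cdot_col3 col3E0.
  move: (py b o0 0) (py b o1 0) (py b o2 0) => x0 x1 x2 R2 R4; apply: iso_e R4.
  apply: (mulfI nm); rewrite mulr0 -R2; ring.
have Eb : b = binv m (px b o0 0) (py b o0 0) (pr b).
  by rewrite [LHS]pt_eta h0 EM {1}Ex {1}Ey.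
exists m, (px b o0 0), (py b o0 0), (pr b); split => //.
apply: contra Nnz => /eqP H; rewrite Eb Nmat_binv H scale0r //.
Qed.

Lemma rep_sim (b : pt R) : similarity_point b -> left_right_sim b (south R) (south R) ->
  exists xi eta r, [/\ xi != 0, eta != 0 & b = bsim xi eta r].
Proof.
case=> [[HX h0] [M0 [xnz ynz]]] [Sx Sy].
have [R1 R2 R3 R4] := X_rel HX h0.
have [Ex x0] := Smap_south R3 Sx.
have [Ey y0] := Smap_south R4 Sy.
exists (px b o0 0), (py b o0 0), (pr b); split => //.
by rewrite [LHS]pt_eta h0 M0 {1}Ex {1}Ey.
Qed.

Definition kinv (b : pt R) : C -> option C :=
  inversion_map ((pr b * pM b o0 o0 + 2%:R * px b o0 0 * py b o0 0) / (2%:R * pM b o0 o0 ^+ 2))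
    (- (py b o0 0 / pM b o0 o0)) (- (px b o0 0 / pM b o0 o0)).

Definition ksim (b : pt R) : C -> C :=
  fun z => - (px b o0 0 / py b o0 0) * z + pr b / (2%:R * py b o0 0).

Lemma kinv_binv (m xi eta r : C) : kinv (binv m xi eta r) =
  inversion_map ((r * m + 2%:R * xi * eta) / (2%:R * m ^+ 2)) (- (eta / m)) (- (xi / m)).
Proof. by rewrite /kinv /binv /= !mxE /= !mulr1. Qed.

Lemma ksim_bsim (xi eta r : C) : ksim (bsim xi eta r) =
  fun z => - (xi / eta) * z + r / (2%:R * eta).
Proof. by rewrite /ksim /bsim /= !mxE /= !mulr1. Qed.

Lemma neq_shift (z c : C) : c != 0 -> (z + c == z) = false.
Proof. by move=> nc; apply/negbTE; rewrite -subr_eq0 addrAC subrr add0r. Qed.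

Lemma addKsub (z c : C) : z + c - z = c.
Proof. by rewrite addrAC subrr add0r. Qed.

Lemma inversion_map_inj (al z0 w0 al' z0' w0' : C) :
  inversion_map al z0 w0 = inversion_map al' z0' w0' -> [/\ al = al', z0 = z0' & w0 = w0'].
Proof.
move=> E.
have Ez : z0 = z0'.
  have := congr1 (fun g => g z0) E; rewrite /inversion_map eqxx.
  by case: eqP.
subst z0'.
have n1 : (1 : C) != 0 by rewrite oner_eq0.
have n1' : (-1 : C) != 0 by rewrite oppr_eq0 oner_eq0.
have n2 : (2%:R : C) != 0 by rewrite pnatr_eq0.
have := congr1 (fun g => g (z0 + 1)) E; have := congr1 (fun g => g (z0 + -1)) E.
rewrite /inversion_map !neq_shift // => -[E2] [E1].
move: E1 E2; rewrite !addKsub !divr1 => E1 E2.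
have H : (al - al') * 2%:R = (al + w0 - (al' + w0')) - (al / -1 + w0 - (al' / -1 + w0')).
  by rewrite invrN1; ring.
rewrite E1 E2 !subrr ?subr0 in H.
have Ea : al = al'.
  by move/eqP: H; rewrite mulf_eq0 (negbTE n2) orbF subr_eq0 => /eqP.
split => //; move: E1; rewrite Ea; exact: addrI.
Qed.

Lemma eq_iff0 (a b : C) : a = b -> (a = 0 <-> b = 0).
Proof. by move->. Qed.

Lemma ps_binv (m xi eta r : C) (p P : 'cV[R]_3) :
  pseudo_spherical (binv m xi eta r) p P <->
  r - 2%:R * xi * proj_xy p - 2%:R * eta * proj_xy P - 2%:R * m * (proj_xy p * proj_xy P) = 0.
Proof.
rewrite /pseudo_spherical /binv /proj_xy /= !projE.
rewrite (col3P p) (col3P P) /cvec !map_col3 /= /ev /Em !scale_col3 scale_mx3 mul_mx3c !cdot_col3.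
rewrite ord3_0 ord3_1 !col3E0 !col3E1.
by apply: eq_iff0; ring: Hi_.
Qed.

Lemma ps_bsim (xi eta r : C) (p P : 'cV[R]_3) :
  pseudo_spherical (bsim xi eta r) p P <->
  r - 2%:R * xi * proj_xy p - 2%:R * eta * proj_xy P = 0.
Proof.
rewrite /pseudo_spherical /bsim /proj_xy /= !projE.
rewrite (col3P p) (col3P P) /cvec !map_col3 /= /ev !scale_col3 mul0mx !cdot_col3.
rewrite col3_0 cdot_col3 ord3_0 ord3_1 !col3E0 !col3E1.
by apply: eq_iff0; ring: Hi_.
Qed.

Lemma inv_equiv (m xi eta r q Q : C) : m != 0 -> r * m + 2%:R * xi * eta != 0 ->
  (r - 2%:R * xi * q - 2%:R * eta * Q - 2%:R * m * (q * Q) = 0) <->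
  inversion_map ((r * m + 2%:R * xi * eta) / (2%:R * m ^+ 2)) (- (eta / m)) (- (xi / m)) q = Some Q.
Proof.
move=> nm nN.
have n2 : (2%:R : C) != 0 by rewrite pnatr_eq0.
rewrite /inversion_map; case: eqP => [Hq|/eqP Hq].
  split => // H; exfalso; move/eqP: nN; apply.
  have -> : r * m + 2%:R * xi * eta =
    m * (r - 2%:R * xi * q - 2%:R * eta * Q - 2%:R * m * (q * Q)).
    by rewrite Hq; field; rewrite ?nm.
  by rewrite H mulr0.
have nD : eta + m * q != 0.
  apply: contra Hq => /eqP H; apply/eqP.
  have -> : q = (eta + m * q - eta) / m by field; rewrite ?nm.
  by rewrite H; field; rewrite ?nm.
have nD' : q - - (eta / m) != 0 by rewrite subr_eq0.
split => [H|[<-]].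
  congr Some.
  have HQ : Q = (r - 2%:R * xi * q) / (2%:R * (eta + m * q)).
    apply: (mulIf (mulf_neq0 n2 nD)); rewrite divfK ?mulf_neq0 //.
    apply/eqP; rewrite -subr_eq0; apply/eqP.
    have -> : Q * (2%:R * (eta + m * q)) - (r - 2%:R * xi * q) =
      - (r - 2%:R * xi * q - 2%:R * eta * Q - 2%:R * m * (q * Q)) by ring.
    by rewrite H oppr0.
  rewrite HQ; apply/eqP; rewrite -subr_eq0; apply/eqP.
  have -> : q - - (eta / m) = (eta + m * q) / m by field; rewrite ?nm.
  by field; rewrite ?nD ?nm ?n2.
have -> : q - - (eta / m) = (eta + m * q) / m by field; rewrite ?nm.
by field; rewrite ?nD ?nm ?n2.
Qed.

End Rep.

Lemma sim_equiv (R : realType) (xi eta r q Q : R[i]) : eta != 0 ->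
  (r - 2%:R * xi * q - 2%:R * eta * Q = 0) <-> - (xi / eta) * q + r / (2%:R * eta) = Q.
Proof.
move=> ne; have n2 : (2%:R : R[i]) != 0 by rewrite pnatr_eq0.
split => [H|<-].
  apply/eqP; rewrite -subr_eq0; apply/eqP.
  have -> : - (xi / eta) * q + r / (2%:R * eta) - Q =
    (r - 2%:R * xi * q - 2%:R * eta * Q) / (2%:R * eta) by field; rewrite ?ne ?n2.
  by rewrite H mul0r.
by field; rewrite ?ne ?n2.
Qed.

Local Open Scope ring_scope.
Local Open Scope complex_scope.

Theorem mainTheorem2 (R : realType) :
  (exists kappa : pt R -> (R[i] -> option R[i]),
     (forall b, inversion_point b -> left_right_ib b (south R) (south R) ->
        is_inversion (kappa b)) /\
     (forall b b', inversion_point b -> left_right_ib b (south R) (south R) ->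
        inversion_point b' -> left_right_ib b' (south R) (south R) ->
        (kappa b = kappa b' <-> same_proj_point b b')) /\
     (forall f, is_inversion f -> exists b, inversion_point b /\
        left_right_ib b (south R) (south R) /\ kappa b = f) /\
     (forall b, inversion_point b -> left_right_ib b (south R) (south R) ->
        forall p P : 'cV[R]_3,
          pseudo_spherical b p P <-> kappa b (proj_xy p) = Some (proj_xy P)))
  /\
  (exists kappa : pt R -> (R[i] -> R[i]),
     (forall b, similarity_point b -> left_right_sim b (south R) (south R) ->
        is_similarity (kappa b)) /\
     (forall b b', similarity_point b -> left_right_sim b (south R) (south R) ->
        similarity_point b' -> left_right_sim b' (south R) (south R) ->
        (kappa b = kappa b' <-> same_proj_point b b')) /\
     (forall f, is_similarity f -> exists b, similarity_point b /\
        left_right_sim b (south R) (south R) /\ kappa b = f) /\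
     (forall b, similarity_point b -> left_right_sim b (south R) (south R) ->
        forall p P : 'cV[R]_3,
          pseudo_spherical b p P <-> kappa b (proj_xy p) = proj_xy P)).
Proof.
have Hi : ('i : R[i]) ^+ 2 = -1 by exact: sqrCi.
have n2 : (2%:R : R[i]) != 0 by rewrite pnatr_eq0.
have ni := @i_neq0 R.
split.
- exists (@kinv R); split; [|split; [|split]].
  + move=> b Hb Hlr; have [m [xi [eta [r [nm nN ->]]]]] := rep_inv Hb Hlr.
    rewrite kinv_binv.
    exists ((r * m + 2%:R * xi * eta) / (2%:R * m ^+ 2)), (- (eta / m)), (- (xi / m)); split => //.
    by rewrite mulf_neq0 // invr_neq0 // mulf_neq0 // expf_neq0.
  + move=> b b' Hb Hlr Hb' Hlr'.
    have [m [xi [eta [r [nm nN ->]]]]] := rep_inv Hb Hlr.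
    have [m' [xi' [eta' [r' [nm' nN' ->]]]]] := rep_inv Hb' Hlr'.
    rewrite !kinv_binv; split.
    * move/inversion_map_inj => [Ha Hz Hw].
      have Exi : xi' = m' / m * xi.
        move/oppr_inj: Hw => Hw.
        by rewrite -[xi'](divfK nm') -Hw; field; rewrite ?nm.
      have Eeta : eta' = m' / m * eta.
        move/oppr_inj: Hz => Hz.
        by rewrite -[eta'](divfK nm') -Hz; field; rewrite ?nm.
      have Er : r' = m' / m * r.
        have -> : r' = ((r' * m' + 2%:R * xi' * eta') / (2%:R * m' ^+ 2) * (2%:R * m' ^+ 2)
                        - 2%:R * xi' * eta') / m' by field; rewrite ?nm' ?n2.
        rewrite -Ha Exi Eeta; field; by rewrite ?nm ?nm' ?n2.
      exists (m' / m); split; first by rewrite mulf_neq0 // invr_neq0.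
      rewrite /pt_scale /binv /=; congr Pt; rewrite ?mulr0 ?scalerA ?divfK // ?Exi ?Eeta ?Er //.
    * case=> l [nl Eb].
      have Em' : m' = l * m.
        by have := congr1 (fun b => pM b o0 o0) Eb; rewrite /= !mxE /= !mulr1.
      have Exi : xi' = l * xi.
        by have := congr1 (fun b => px b o0 0) Eb; rewrite /= !mxE /= !mulr1.
      have Eeta : eta' = l * eta.
        by have := congr1 (fun b => py b o0 0) Eb; rewrite /= !mxE /= !mulr1.
      have Er : r' = l * r by have := congr1 (fun b => pr b) Eb.
      rewrite Em' Exi Eeta Er; congr inversion_map.
      - by field; rewrite ?nm ?nl ?n2.
      - by field; rewrite ?nm ?nl.
      - by field; rewrite ?nm ?nl.
  + move=> g [al [z0 [w0 [nal ->]]]].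
    move: (sqrtCK (- (8%:R * 'i * al))); move: (sqrtC _) => s Hs.
    pose eta := - (2%:R * z0); pose c2 := - (2%:R * 'i * w0).
    have n4 : - (4%:R * 'i) != 0 :> R[i] by rewrite oppr_eq0 mulf_neq0 // pnatr_eq0.
    have ns : s ^+ 2 != 0 by rewrite Hs oppr_eq0 !mulf_neq0 // pnatr_eq0.
    exists (binv (- (4%:R * 'i)) (- (2%:R * c2)) (- (2%:R * 'i * eta)) (2%:R * eta * c2 + s^+2)).
    split; [|split].
    * split; first by split; [exact: inX_binv | done].
      split; first exact: Em_neq0.
      rewrite Nmat_binv; apply: Em_neq0.
      have -> : (2%:R * eta * c2 + s ^+ 2) * - (4%:R * 'i) + 2%:R * - (2%:R * c2) * - (2%:R * 'i * eta)
                = - (4%:R * 'i) * s ^+ 2 by ring.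
      by rewrite mulf_neq0.
    * exists (- (4%:R * 'i) *: ev), ev.
      have nev : ev != 0 :> 'cV[R[i]]_3 by rewrite -[ev]scale1r ev_neq0 ?oner_eq0.
      have iso : isotropic (ev : 'cV[R[i]]_3) by rewrite /isotropic /ev cdot_col3; ring: Hi.
      split; first exact: ev_neq0.
      split; first exact: nev.
      split; first by rewrite /isotropic /ev scale_col3 cdot_col3; ring: Hi.
      split; first exact: iso.
      split; first by rewrite -scalemxAl ev_Em.
      split; first by rewrite -[ev]scale1r Smap_ev ?oner_eq0.
      exact: Smap_ev.
    * rewrite kinv_binv Hs /eta /c2; congr inversion_map.
      - by field: Hi; rewrite ?ni ?n2 ?nal.
      - by field: Hi; rewrite ?ni ?n2 ?nal.
      - by field: Hi; rewrite ?ni ?n2 ?nal.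
  + move=> b Hb Hlr p P; have [m [xi [eta [r [nm nN ->]]]]] := rep_inv Hb Hlr.
    by rewrite ps_binv kinv_binv; apply: inv_equiv.
- exists (@ksim R); split; [|split; [|split]].
  + move=> b Hb Hlr; have [xi [eta [r [nx ne ->]]]] := rep_sim Hb Hlr.
    rewrite ksim_bsim; exists (- (xi / eta)), (r / (2%:R * eta)); split => //.
    by rewrite oppr_eq0 mulf_neq0 // invr_neq0.
  + move=> b b' Hb Hlr Hb' Hlr'.
    have [xi [eta [r [nx ne ->]]]] := rep_sim Hb Hlr.
    have [xi' [eta' [r' [nx' ne' ->]]]] := rep_sim Hb' Hlr'.
    rewrite !ksim_bsim; split.
    * move=> E.
      have E0 := congr1 (fun g => g 0) E; have E1 := congr1 (fun g => g 1) E.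
      move: E0 E1 => /= E0 E1.
      rewrite !mulr0 !add0r in E0; rewrite !mulr1 E0 in E1; move/addIr/oppr_inj: E1 => E1.
      exists (eta' / eta); split; first by rewrite mulf_neq0 // invr_neq0.
      rewrite /pt_scale /bsim /=; congr Pt.
      - by rewrite mulr0.
      - by rewrite scaler0.
      - rewrite scalerA; congr (_ *: _).
        by rewrite -[xi'](divfK ne') -E1; field; rewrite ?ne.
      - by rewrite scalerA divfK.
      - have -> : r' = r' / (2%:R * eta') * (2%:R * eta') by field; rewrite ?ne' ?n2.
        by rewrite -E0; field; rewrite ?ne ?n2.
    * case=> l [nl Eb].
      have Exi : xi' = l * xi.
        by have := congr1 (fun b => px b o0 0) Eb; rewrite /= !mxE /= !mulr1.
      have Eeta : eta' = l * eta.
        by have := congr1 (fun b => py b o0 0) Eb; rewrite /= !mxE /= !mulr1.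
      have Er : r' = l * r by have := congr1 (fun b => pr b) Eb.
      rewrite Exi Eeta Er.
      have -> : l * xi / (l * eta) = xi / eta by field; rewrite ?ne ?nl.
      have -> : l * r / (2%:R * (l * eta)) = r / (2%:R * eta) by field; rewrite ?ne ?nl ?n2.
      by [].
  + move=> g [al [ga [nal ->]]].
    pose a := (al + 1) / 2%:R; pose bb := - ('i * (al - 1)) / 2%:R.
    have Ea : a + 'i * bb = al by rewrite /a /bb; field: Hi; rewrite ?n2.
    have Eh : a ^+ 2 + bb ^+ 2 = al by rewrite /a /bb; field: Hi; rewrite ?n2.
    exists (bsim (- ((a + 'i * bb)^+2 * 1)) ((a^+2 + bb^+2) * 1) ((a^+2 + bb^+2) * (2%:R * 1 * ga))).
    have nx : - ((a + 'i * bb)^+2 * 1) != 0 by rewrite Ea mulr1 oppr_eq0 expf_neq0.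
    have ny : (a^+2 + bb^+2) * 1 != 0 by rewrite Eh mulr1.
    split; [|split].
    * split; first by split; [exact: inX_bsim | done].
      by split => //; split; apply: ev_neq0.
    * by split; apply: Smap_ev.
    * rewrite ksim_bsim Ea Eh.
      have -> : - (- (al ^+ 2 * 1) / (al * 1)) = al by field; rewrite ?nal.
      have -> : al * (2%:R * 1 * ga) / (2%:R * (al * 1)) = ga by field; rewrite ?nal ?n2.
      by [].
  + move=> b Hb Hlr p P; have [xi [eta [r [nx ne ->]]]] := rep_sim Hb Hlr.
    by rewrite ps_bsim ksim_bsim; apply: sim_equiv.
Qed.
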